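(* Let $n\ge3$, suppose the generator is $\pi_{\mathrm{gen}}=\pi_{\mathrm{target}}$, and assume rewards lie in $[0,R]$. In the infinite-block-length setting, the sequential Monte Carlo policies satisfy $$\mathbb{E}_{N\sim\mathrm{Poi}(n)|_{>0}}[D_{\mathrm{KL}}(\hat\pi_N\|\pi^\star_\beta)]\le\widetilde{\mathcal{O}}_n\!\left(\frac{e^{2\beta R}}{n^2}\right),$$ and for every fixed $n\ge3$, $$D_{\mathrm{KL}}(\hat\pi_n\|\pi^\star_\beta)\le\widetilde{\mathcal{O}}_n\!\left(\frac{e^{2\beta R}}{n^{3/2}}\right).$$
   Context: Prompts $x$ drawn from $\rho$; $\pi_{\mathrm{target}}$ is a (full-support) conditional distribution over full responses, $r(y|x)\in[0,R]$, $\beta>0$, $\pi^\star_\beta(y|x)\propto\pi_{\mathrm{target}}(y|x)e^{\beta r(y|x)}$. With $\phi_\beta(y|x)=\frac{\pi_{\mathrm{target}}(y|x)}{\pi_{\mathrm{gen}}(y|x)}e^{\beta r(y|x)}$, sequential Monte Carlo with $N$ particles draws $Y_1,\dots,Y_N$ i.i.d. from $\pi_{\mathrm{gen}}(\cdot|x)$ and outputs $Y_i$ with probability $\phi_\beta(Y_i|x)/\sum_j\phi_\beta(Y_j|x)$; $\hat\pi_N$ is its output distribution. $\mathrm{Poi}(n)|_{>0}$ is Poisson with mean $n$ conditioned on being positive. $D_{\mathrm{KL}}(\pi_1\|\pi_2)=\mathbb{E}_{x\sim\rho}D_{\mathrm{KL}}(\pi_1(\cdot|x)\|\pi_2(\cdot|x))$.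 $\widetilde{\mathcal{O}}_n$ hides constants and polylog factors in $n$. *)

(* Defs.v *)
(* Discrete (countably supported) distributions,
   sums are [esum] over arbitrary choice types. *)
From mathcomp Require Import all_boot all_order all_algebra.
From mathcomp Require Import all_classical all_reals all_analysis.
Set Implicit Arguments. Unset Strict Implicit. Unset Printing Implicit Defensive.
Import Order.TTheory GRing.Theory Num.Theory.
Local Open Scope classical_set_scope.
Local Open Scope ring_scope.

Section SMC.
Variable R : realType.

Definition is_distr (T : choiceType) (p : T -> R) : Prop :=
  (forall t, 0 <= p t) /\ (\esum_(t in [set: T]) (p t)%:E = 1)%E.

Definition esumR (T : choiceType) (f : T -> R) : R :=
  fine (\esum_(t in [set: T]) (f t)%:E).

Definition KL (Y : choiceType) (p q : Y -> R) : \bar R :=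
  ((\esum_(y in [set: Y]) (Num.max (p y * ln (p y / q y)) 0)%:E)
   - (\esum_(y in [set: Y]) (Num.max (- (p y * ln (p y / q y))) 0)%:E))%E.

Definition KLcond (X Y : choiceType) (rho : X -> R) (p q : X -> Y -> R) : \bar R :=
  (\esum_(x in [set: X]) ((rho x)%:E * KL (p x) (q x)))%E.

Definition tilted (X Y : choiceType) (pit : X -> Y -> R) (r : X -> Y -> R)
  (beta : R) (x : X) (y : Y) : R :=
  pit x y * expR (beta * r x y) / esumR (fun y' => pit x y' * expR (beta * r x y')).

Definition phi (X Y : choiceType) (pit pig r : X -> Y -> R) (beta : R)
  (x : X) (y : Y) : R :=
  pit x y / pig x y * expR (beta * r x y).

(* output distribution of SMC with N particles (infinite block length):
   Y_1..Y_N iid ~ pi_gen(.|x), output Y_i w.p. phi(Y_i)/sum_j phi(Y_j). *)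
Definition smc_out (X Y : choiceType) (pit pig r : X -> Y -> R) (beta : R)
  (N : nat) (x : X) (y : Y) : R :=
  esumR (fun s : N.-tuple Y =>
    (\prod_(i < N) pig x (tnth s i)) *
    ((\sum_(i < N) (tnth s i == y)%:R * phi pit pig r beta x (tnth s i))
     / (\sum_(j < N) phi pit pig r beta x (tnth s j)))).

Definition poi_pos (n N : nat) : R :=
  expR (- n%:R) * n%:R ^+ N / (N`!)%:R / (1 - expR (- n%:R)).

Definition poi_KL (X Y : choiceType) (rho : X -> R) (pit pig r : X -> Y -> R)
  (beta : R) (n : nat) : \bar R :=
  (\esum_(N in [set N : nat | (0 < N)%N])
     ((poi_pos n N)%:E *
      KLcond rho (smc_out pit pig r beta N) (tilted pit r beta)))%E.

End SMC.

(* Main.v *)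
Require Import Defs.
From mathcomp Require Import all_boot all_order all_algebra.
From mathcomp Require Import all_classical all_reals all_analysis.
From mathcomp Require Import ring lra.
Set Implicit Arguments. Unset Strict Implicit. Unset Printing Implicit Defensive.
Import Order.TTheory GRing.Theory Num.Theory.
Local Open Scope classical_set_scope.
Local Open Scope ring_scope.

Section Aux.
Variable R : realType.

Lemma esumZ (T : choiceType) (S : set T) (r : R) (f : T -> R) : 0 <= r ->
  (\esum_(i in S) (r * f i)%:E = r%:E * \esum_(i in S) (f i)%:E)%E.
Proof.
move=> r0; rewrite /esum -ereal_supZl //; last first.
  by apply/set0P; exists 0%E; exists set0; [exact: fsets_set0 | rewrite fsbig_set0].
congr ereal_sup; apply/seteqP; split => x /=.
  move=> [A [finA AS] <-]; exists (\sum_(i \in A) (f i)%:E)%E; first by exists A.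
  by rewrite !fsumEFin // -EFinM mulr_fsumr.
move=> [y [A [finA AS] <-] <-]; exists A => //.
by rewrite !fsumEFin // -EFinM mulr_fsumr.
Qed.

Lemma divle (x y b d : R) : 0 < b -> 0 < d -> x * d <= y * b -> x / b <= y / d.
Proof.
move=> b0 d0 h; rewrite -subr_ge0 (_ : y / d - x / b = (y * b - x * d) / (d * b)).
  by rewrite divr_ge0 ?subr_ge0 // mulr_ge0 // ltW.
by field; rewrite !gt_eqF.
Qed.

Lemma alg_lower (mr w Z M mu : R) : 0 <= mr -> 1 <= w -> w <= M -> 1 <= Z -> Z <= M ->
  1 / (w + mr * Z) <= mu -> 1 - M / (mr + 1) <= (mr + 1) * Z * mu.
Proof.
move=> m0 w1 wM Z1 ZM hmu.
have a0 : 0 < w + mr * Z by nra.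
have N0 : 0 < mr + 1 by lra.
apply: (le_trans (y := (mr + 1) * Z / (w + mr * Z))).
  rewrite (_ : 1 - M / (mr + 1) = (mr + 1 - M) / (mr + 1)); last by field; rewrite gt_eqF.
  apply: divle => //.
  have h1 : w <= M * w by rewrite -[X in X <= _]mul1r; apply: ler_wpM2r; lra.
  have h2 : mr * w <= mr * M * Z.
    apply: (le_trans (ler_wpM2l m0 wM)); rewrite -[X in X <= _]mulr1; apply: ler_wpM2l => //.
    exact: mulr_ge0 m0 (le_trans ler01 (le_trans w1 wM)).
  nra.
have -> : (mr + 1) * Z / (w + mr * Z) = (mr + 1) * Z * (1 / (w + mr * Z)) by rewrite mul1r.
apply: ler_wpM2l => //; nra.
Qed.

Lemma alg_upper (mr w Z M W2 mu : R) : 0 <= mr -> (mr = 0 \/ 1 <= mr) -> 1 <= w -> w <= M -> 1 <= Z -> Z <= M ->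
  W2 <= M * Z ->
  mu <= 1 / (w + mr * Z) + mr * (W2 - Z ^+ 2) / ((w + mr * Z) ^+ 2 * (w + mr)) ->
  (mr + 1) * Z * mu <= 1 + 3 * M / (mr + 1).
Proof.
move=> m0 m01 w1 wM Z1 ZM W2M hmu.
have a0 : 0 < w + mr * Z by nra.
have N0 : 0 < mr + 1 by lra.
have L0 : 0 < w + mr by lra.
have NZ0 : 0 <= (mr + 1) * Z by nra.
apply: (le_trans (ler_wpM2l NZ0 hmu)).
rewrite mulrDr.
have U1 : (mr + 1) * Z * (1 / (w + mr * Z)) <= 1 + M / (mr + 1).
  rewrite mulrA mulr1 (_ : 1 + M / (mr + 1) = (mr + 1 + M) / (mr + 1)); last by field; rewrite gt_eqF.
  apply: divle => //.
  have h1 : Z <= M * w.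
    apply: (le_trans ZM); rewrite -[X in X <= _]mulr1; apply: ler_wpM2l => //; lra.
  have h2 : mr * Z <= mr * M * Z.
    rewrite -mulrA; apply: ler_wpM2l => //; rewrite -[X in X <= _]mul1r; apply: ler_wpM2r; lra.
  nra.
have U2 : (mr + 1) * Z * (mr * (W2 - Z ^+ 2) / ((w + mr * Z) ^+ 2 * (w + mr))) <= 2 * M / (mr + 1).
  rewrite mulrA; apply: divle => //; first by rewrite mulr_gt0 // exprn_gt0.
  have h0 : (mr + 1) * Z * (mr * (W2 - Z ^+ 2)) <= (mr + 1) * Z * (mr * (M * Z)).
    apply: ler_wpM2l => //; apply: ler_wpM2l => //; nra.
  apply: (le_trans (ler_wpM2r (ltW N0) h0)).
  have hmz : 0 <= mr * Z by apply: mulr_ge0; lra.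
  have h3 : mr ^+ 2 * Z ^+ 2 <= (w + mr * Z) ^+ 2.
    by rewrite -exprMn lerXn2r ?nnegrE; lra.
  have h4 : (mr + 1) <= w + mr by lra.
  have h5 : mr ^+ 2 * Z ^+ 2 * (mr + 1) <= (w + mr * Z) ^+ 2 * (w + mr).
    apply: (le_trans (ler_wpM2l _ h4)); first nra.
    by apply: ler_wpM2r; [lra | exact: h3].
  have h6 : (mr + 1) * Z * (mr * (M * Z)) * (mr + 1) <= 2 * M * (mr ^+ 2 * Z ^+ 2 * (mr + 1)).
    case: m01 => [->|m1]; first by rewrite le_eqVlt; apply/orP; left; apply/eqP; ring.
    have : (mr + 1) <= 2 * mr by lra.
    move=> h7; rewrite (_ : (mr + 1) * Z * (mr * (M * Z)) * (mr + 1) = (mr + 1) * (M * mr * Z ^+ 2 * (mr + 1))); last by ring.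
    rewrite (_ : 2 * M * (mr ^+ 2 * Z ^+ 2 * (mr + 1)) = (2 * mr) * (M * mr * Z ^+ 2 * (mr + 1))); last by ring.
    apply: ler_wpM2r => //.
    apply: mulr_ge0; [apply: mulr_ge0; [apply: mulr_ge0; lra| exact: sqr_ge0]| lra].
  apply: (le_trans h6); apply: ler_wpM2l; first lra.
  exact: h5.
have -> : 1 + 3 * M / (mr + 1) = (1 + M / (mr + 1)) + 2 * M / (mr + 1) by field; rewrite gt_eqF.
exact: lerD.
Qed.

Lemma ptl (K a : R) : 0 < K -> 0 < a -> 2 / a <= 1 / K + (a ^+ 2)^-1 * K.
Proof.
move=> K0 a0; rewrite -subr_ge0.
have -> : 1 / K + (a ^+ 2)^-1 * K - 2 / a = (K - a) ^+ 2 / (a ^+ 2 * K).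
  by field; rewrite !gt_eqF.
by rewrite divr_ge0 ?sqr_ge0 ?mulr_ge0 ?sqr_ge0 ?ltW.
Qed.

Lemma ptu (K a L : R) : 0 < L -> L <= K -> 0 < a ->
  1 / K + (a ^+ 2)^-1 * K <= 2 / a + ((a ^+ 2)^-1 / L) * (K - a) ^+ 2.
Proof.
move=> L0 LK a0; have K0 : 0 < K by apply: lt_le_trans LK.
rewrite -subr_ge0.
have -> : 2 / a + ((a ^+ 2)^-1 / L) * (K - a) ^+ 2 - (1 / K + (a ^+ 2)^-1 * K) =
   (K - a) ^+ 2 * (K - L) / (a ^+ 2 * L * K).
  by field; rewrite !gt_eqF.
apply: divr_ge0; first by apply: mulr_ge0; [exact: sqr_ge0| rewrite subr_ge0].
by apply: mulr_ge0; [apply: mulr_ge0; [exact: sqr_ge0|exact: ltW] | exact: ltW].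
Qed.

Lemma fin_bnd (x : \bar R) (B : R) : (0 <= x)%E -> (x <= B%:E)%E -> x = (fine x)%:E.
Proof. by case: x. Qed.

Section Gen.
Variables (T : choiceType) (q : T -> R).
Hypothesis q0 : forall t, 0 <= q t.
Hypothesis q1 : (\esum_(t in [set: T]) (q t)%:E = 1)%E.

Definition wE (F : T -> R) : \bar R := (\esum_(t in [set: T]) (q t * F t)%:E)%E.
Definition wR F := fine (wE F).
Definition nb (F : T -> R) := exists2 B, 0 <= B & forall t, 0 <= F t <= B.

Lemma wE_ge0 F : (forall t, 0 <= F t) -> (0 <= wE F)%E.
Proof. by move=> F0; apply: esum_ge0 => t _; rewrite lee_fin mulr_ge0. Qed.

Lemma wE_const c : 0 <= c -> wE (fun _ => c) = c%:E.
Proof.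
move=> c0; rewrite /wE.
under eq_esum do rewrite mulrC.
by rewrite esumZ // q1 mule1.
Qed.

Lemma wE_mono F G : (forall t, F t <= G t) -> (wE F <= wE G)%E.
Proof. by move=> FG; apply: le_esum => t _; rewrite lee_fin ler_wpM2l. Qed.

Lemma wE_le F B : (forall t, F t <= B) -> 0 <= B -> (wE F <= B%:E)%E.
Proof. by move=> FB B0; rewrite -(wE_const B0); apply: wE_mono. Qed.

Lemma wE_fin F : nb F -> wE F = (wR F)%:E.
Proof.
move=> [B B0 FB]; apply: (@fin_bnd _ B).
  by apply: wE_ge0 => t; case/andP: (FB t).
by apply: wE_le => // t; case/andP: (FB t).
Qed.

Lemma nb_ge0 F : nb F -> forall t, 0 <= F t.
Proof. by move=> [B _ FB] t; case/andP: (FB t). Qed.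

Lemma wED F G : (forall t, 0 <= F t) -> (forall t, 0 <= G t) ->
  wE (fun t => F t + G t) = (wE F + wE G)%E.
Proof.
move=> F0 G0; rewrite /wE -esumD; last 2 first.
- by move=> t _; rewrite lee_fin mulr_ge0.
- by move=> t _; rewrite lee_fin mulr_ge0.
by apply: eq_esum => t _; rewrite mulrDr.
Qed.

Lemma wEZ c F : 0 <= c -> wE (fun t => c * F t) = (c%:E * wE F)%E.
Proof.
move=> c0; rewrite /wE -esumZ //; apply: eq_esum => t _.
by rewrite mulrCA.
Qed.

Lemma nbD F G : nb F -> nb G -> nb (fun t => F t + G t).
Proof.
move=> [B B0 FB] [C C0 GC]; exists (B + C); first exact: addr_ge0.
move=> t; case/andP: (FB t) => ? ?; case/andP: (GC t) => ? ?.
by rewrite addr_ge0 //= lerD.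
Qed.

Lemma nbZ c F : 0 <= c -> nb F -> nb (fun t => c * F t).
Proof.
move=> c0 [B B0 FB]; exists (c * B); first exact: mulr_ge0.
by move=> t; case/andP: (FB t) => ? ?; rewrite mulr_ge0 //= ler_wpM2l.
Qed.

Lemma nbC c : 0 <= c -> nb (fun _ => c).
Proof. by move=> c0; exists c => // t; rewrite c0 lexx. Qed.

Lemma wRD F G : nb F -> nb G -> wR (fun t => F t + G t) = wR F + wR G.
Proof.
move=> nF nG; rewrite /wR wED ?(wE_fin nF) ?(wE_fin nG) //; exact: nb_ge0.
Qed.

Lemma wRZ c F : 0 <= c -> nb F -> wR (fun t => c * F t) = c * wR F.
Proof. by move=> c0 nF; rewrite /wR wEZ // (wE_fin nF). Qed.

Lemma wRC c : 0 <= c -> wR (fun _ => c) = c.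
Proof. by move=> c0; rewrite /wR wE_const. Qed.

Lemma wR_mono F G : nb F -> nb G -> (forall t, F t <= G t) -> wR F <= wR G.
Proof.
by move=> nF nG FG; rewrite -lee_fin -(wE_fin nF) -(wE_fin nG) wE_mono.
Qed.

Lemma wR_ge0 F : nb F -> 0 <= wR F.
Proof. by move=> nF; rewrite -lee_fin -(wE_fin nF) wE_ge0 //; exact: nb_ge0. Qed.

Lemma wR_le F B : nb F -> (forall t, F t <= B) -> 0 <= B -> wR F <= B.
Proof. by move=> nF FB B0; rewrite -lee_fin -(wE_fin nF) wE_le. Qed.


Lemma nb_sum k (F : 'I_k -> T -> R) : (forall i, nb (F i)) -> nb (fun t => \sum_(i < k) F i t).
Proof.
elim: k F => [|k IH] F nF.
  by exists 0 => // t; rewrite big_ord0 lexx.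
have -> : (fun t => \sum_(i < k.+1) F i t) = (fun t => \sum_(i < k) F (widen_ord (leqnSn k) i) t + F ord_max t).
  by apply/funext => t; rewrite big_ord_recr.
by apply: nbD => //; apply: IH.
Qed.

Lemma wR_sum k (F : 'I_k -> T -> R) : (forall i, nb (F i)) ->
  wR (fun t => \sum_(i < k) F i t) = \sum_(i < k) wR (F i).
Proof.
elim: k F => [|k IH] F nF.
  rewrite big_ord0 -[RHS](wRC (lexx 0)); congr wR; apply/funext => t; by rewrite big_ord0.
have -> : (fun t => \sum_(i < k.+1) F i t) = (fun t => \sum_(i < k) F (widen_ord (leqnSn k) i) t + F ord_max t).
  by apply/funext => t; rewrite big_ord_recr.
rewrite wRD ?IH ?big_ord_recr //; last exact: nb_sum.
Qed.

End Gen.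
Section Tup.
Variables (Y : choiceType) (p : Y -> R).
Hypothesis p0 : forall y, 0 <= p y.
Hypothesis p1 : (\esum_(y in [set: Y]) (p y)%:E = 1)%E.

Definition P N (s : N.-tuple Y) := \prod_(i < N) p (tnth s i).
Definition Ex N (F : N.-tuple Y -> R) : \bar R := wE (@P N) F.

Lemma P_ge0 N (s : N.-tuple Y) : 0 <= P s.
Proof. by apply: prodr_ge0 => i _; exact: p0. Qed.

Lemma Pcons m t (s : m.-tuple Y) : P [tuple of t :: s] = p t * P s.
Proof.
rewrite /P big_ord_recl; congr (_ * _).
by apply: eq_bigr => i _; rewrite tnthS.
Qed.

Lemma Ex0 (F : 0.-tuple Y -> R) : 0 <= F [tuple] -> Ex F = (F [tuple])%:E.
Proof.
move=> F0; rewrite /Ex /wE (_ : [set: 0.-tuple Y] = [set [tuple]]); last first.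
  by apply/seteqP; split => s //= _; rewrite tuple0.
by rewrite esum_set1 /P big_ord0 ?mul1r //.
Qed.

Lemma Exdec m (F : m.+1.-tuple Y -> R) : (forall s, 0 <= F s) ->
  Ex F = (\esum_(t in [set: Y]) ((p t)%:E * Ex (fun s => F [tuple of t :: s])))%E.
Proof.
move=> F0; rewrite /Ex /wE.
rewrite (reindex_esum [set: Y * m.-tuple Y] _ (fun ts => [tuple of ts.1 :: ts.2])); last first.
  rewrite setTT_bijective.
  exists (fun s : m.+1.-tuple Y => (thead s, [tuple of behead s])).
    by case=> t s /=; rewrite theadE; congr pair; apply: val_inj.
  by move=> s /=; rewrite [RHS]tuple_eta.
rewrite (_ : [set: Y * m.-tuple Y] = [set: Y] `*`` (fun _ => [set: m.-tuple Y])); last first.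
  by apply/seteqP; split => -[].
rewrite -(@esum_esum _ _ _ [set: Y] (fun _ => [set: m.-tuple Y]) (fun t s => (P [tuple of t :: s] * F [tuple of t :: s])%:E)); last first.
  by move=> t s _ _; rewrite lee_fin mulr_ge0 // P_ge0.
apply: eq_esum => t _.
rewrite -esumZ //; apply: eq_esum => s _.
by rewrite Pcons mulrA.
Qed.

Lemma Ex_one N : Ex (fun _ : N.-tuple Y => 1) = 1%E.
Proof.
elim: N => [|m IH]; first by rewrite Ex0.
rewrite Exdec // (eq_esum (b := fun t => (p t)%:E)) // => t _.
by rewrite IH mule1.
Qed.

Lemma P1 N : (\esum_(s in [set: N.-tuple Y]) (P s)%:E = 1)%E.
Proof. by rewrite -(Ex_one N); apply: eq_esum => s _; rewrite mulr1. Qed.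

Lemma nb_cons m (F : m.+1.-tuple Y -> R) (t : Y) : nb F -> nb (fun s : m.-tuple Y => F [tuple of t :: s]).
Proof. by move=> [B B0 FB]; exists B => // s. Qed.

Lemma nb_dec m (F : m.+1.-tuple Y -> R) : nb F ->
  nb (fun t : Y => wR (@P m) (fun s : m.-tuple Y => F [tuple of t :: s])).
Proof.
move=> nF; have [B B0 FB] := nF; exists B => // t.
rewrite wR_ge0 //=; [|exact: P_ge0|exact: P1|exact: nb_cons].
apply: wR_le => //; [exact: P_ge0|exact: P1|exact: nb_cons|].
by move=> s; case/andP: (FB [tuple of t :: s]).
Qed.

Lemma ER_dec m (F : m.+1.-tuple Y -> R) : nb F ->
  wR (@P m.+1) F = wR p (fun t : Y => wR (@P m) (fun s : m.-tuple Y => F [tuple of t :: s])).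
Proof.
move=> nF; rewrite /wR; congr fine.
have -> : wE (@P m.+1) F = Ex F by [].
rewrite Exdec; last exact: nb_ge0.
apply: eq_esum => t _; rewrite /Ex (wE_fin (@P_ge0 m) (@P1 m) (nb_cons t nF)).
by [].
Qed.


Lemma eq_wR (T : choiceType) (q : T -> R) (F1 F2 : T -> R) : (forall t, F1 t = F2 t) -> wR q F1 = wR q F2.
Proof. by move=> FG; congr wR; apply/funext. Qed.

Lemma nb_wR_unif N (F : Y -> N.-tuple Y -> R) B : 0 <= B -> (forall t s, 0 <= F t s <= B) ->
  nb (fun t => wR (@P N) (F t)).
Proof.
move=> B0 FB; have nF t : nb (F t) by exists B.
exists B => // t; rewrite wR_ge0 //=; [|exact: P_ge0|exact: P1].
by apply: wR_le => //; [exact: P_ge0|exact: P1| move=> s; case/andP: (FB t s)].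
Qed.

Variable (w : Y -> R) (M : R).
Hypothesis w1 : forall t, 1 <= w t.
Hypothesis wM : forall t, w t <= M.
Variable y : Y.

Definition S N (s : N.-tuple Y) := \sum_(i < N) w (tnth s i).
Definition dl (t : Y) : R := (t == y)%:R.

Lemma Scons m t (s : m.-tuple Y) : S [tuple of t :: s] = w t + S s.
Proof. by rewrite /S big_ord_recl tnth0; congr (_ + _); apply: eq_bigr => i _; rewrite tnthS. Qed.

Lemma S_ge N (s : N.-tuple Y) : N%:R <= S s.
Proof.
have <- : \sum_(i < N) (1:R) = N%:R by rewrite sumr_const card_ord.
by rewrite /S; apply: ler_sum => i _; exact: w1.
Qed.

Lemma S_ge0 N (s : N.-tuple Y) : 0 <= S s.
Proof. exact: le_trans (S_ge s). Qed.

Lemma S_le N (s : N.-tuple Y) : S s <= N%:R * M.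
Proof.
have <- : \sum_(i < N) M = N%:R * M by rewrite sumr_const card_ord mulr_natl.
by rewrite /S; apply: ler_sum => i _; exact: wM.
Qed.

Lemma dl01 t : 0 <= dl t <= 1.
Proof. by rewrite /dl; case: (t == y); rewrite ?ler01 ?lexx. Qed.

Lemma wR_single (h : Y -> R) : nb h -> wR p (fun t => dl t * h t) = p y * h y.
Proof.
move=> nh; have h0 := nb_ge0 nh.
rewrite /wR /wE (esumID [set y]); last first.
  by move=> t _; rewrite lee_fin mulr_ge0 // mulr_ge0 //; case/andP: (dl01 t).
rewrite setTI esum_set1; last first.
  by rewrite lee_fin mulr_ge0 // mulr_ge0 //; case/andP: (dl01 y).
rewrite esum1 ?adde0 /= /dl ?eqxx ?mul1r //.
move=> t [_ /eqP]; rewrite /dl; case: eqP => // _ _.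
by rewrite mul0r mulr0.
Qed.

Lemma nbG N (c : R) G B : 0 <= B -> (forall x, 1 <= x -> 0 <= G x <= B) -> 1 <= c ->
  nb (fun s : N.-tuple Y => G (c + S s)).
Proof.
move=> B0 GB c1; exists B => // s; apply: GB.
by rewrite -[1]addr0 lerD // S_ge0.
Qed.

Lemma nbdG m (i : 'I_m.+1) G B : 0 <= B -> (forall x, 1 <= x -> 0 <= G x <= B) ->
  nb (fun s : m.+1.-tuple Y => dl (tnth s i) * G (S s)).
Proof.
move=> B0 GB; exists B => // s.
have /GB/andP[G0 GB'] : 1 <= S s by apply: le_trans (S_ge s); rewrite ler1n.
case/andP: (dl01 (tnth s i)) => d0 d1.
rewrite mulr_ge0 //=; rewrite -[B]mul1r; exact: ler_pM.
Qed.

Lemma K1_0 m G B : 0 <= B -> (forall x, 1 <= x -> 0 <= G x <= B) ->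
  wR (@P m.+1) (fun s => dl (tnth s ord0) * G (S s)) =
  p y * wR (@P m) (fun s => G (w y + S s)).
Proof.
move=> B0 GB; rewrite ER_dec; last exact: (nbdG _ B0 GB).
rewrite (@eq_wR _ _ _ (fun t => dl t * wR (@P m) (fun s => G (w t + S s)))); last first.
  move=> t; case/andP: (dl01 t) => d0 _.
  rewrite -(wRZ (@P_ge0 m) (@P1 m) d0 (@nbG m (w t) G B B0 GB (w1 t))).
  by apply: eq_wR => s; rewrite tnth0 Scons.
rewrite wR_single //; apply: (@nb_wR_unif m (fun t s => G (w t + S s)) B) => // t s.
by apply: GB; rewrite -[1]addr0 lerD // S_ge0.
Qed.

Lemma K1 m (i : 'I_m.+1) G B : 0 <= B -> (forall x, 1 <= x -> 0 <= G x <= B) ->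
  wR (@P m.+1) (fun s => dl (tnth s i) * G (S s)) =
  p y * wR (@P m) (fun s => G (w y + S s)).
Proof.
elim: m i G => [|m IH] i G B0 GB; case: (unliftP ord0 i) => [j ->|->]; try exact: (@K1_0 _ G B B0 GB).
  by case: j.
rewrite ER_dec; last exact: (nbdG _ B0 GB).
have GB' t : forall x, 1 <= x -> 0 <= G (w t + x) <= B.
  by move=> x x1; apply: GB; rewrite -[1]add0r lerD // (le_trans _ (w1 t)).
rewrite (@eq_wR _ _ _ (fun t => p y * wR (@P m) (fun s => G (w t + (w y + S s))))); last first.
  move=> t; rewrite -(IH j (fun x => G (w t + x)) B0 (GB' t)).
  by apply: eq_wR => s; rewrite tnthS Scons.
have nbX : nb (fun t => wR (@P m) (fun s => G (w t + (w y + S s)))).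
  apply: (@nb_wR_unif m (fun t s => G (w t + (w y + S s))) B) => // t s.
  apply: GB; rewrite -[1]add0r lerD // ?(le_trans _ (w1 t)) //.
  by rewrite -[1]addr0 lerD // S_ge0.
rewrite (wRZ p0 p1 (p0 y) nbX); congr (_ * _).
rewrite (ER_dec (@nbG m.+1 (w y) G B B0 GB (w1 y))).
by apply: eq_wR => t; apply: eq_wR => s; rewrite Scons addrCA.
Qed.


Lemma M0 : 0 <= M.
Proof. exact: le_trans ler01 (le_trans (w1 y) (wM y)). Qed.

Lemma G1B (c : R) : 0 <= c -> forall x, 1 <= x -> 0 <= c / x <= c.
Proof.
move=> c0 x x1; have x0 : 0 < x by apply: lt_le_trans x1.
apply/andP; split; first exact: divr_ge0 c0 (ltW x0).
by rewrite ler_pdivrMr // ler_peMr.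
Qed.

Lemma qform m :
  wR (@P m.+1) (fun s => (\sum_(i < m.+1) dl (tnth s i) * w (tnth s i)) / S s) =
  m.+1%:R * (p y * (w y * wR (@P m) (fun s => 1 / (w y + S s)))).
Proof.
have wy0 : 0 <= w y by apply: le_trans ler01 (w1 y).
rewrite (@eq_wR _ _ _ (fun s => \sum_(i < m.+1) dl (tnth s i) * (w y / S s))); last first.
  move=> s; rewrite mulr_suml; apply: eq_bigr => i _; rewrite /dl.
  by case: eqP => [->|_]; rewrite ?mul0r ?mul1r.
rewrite wR_sum; [|exact: P_ge0|exact: P1|by move=> i; exact: (nbdG i wy0 (G1B wy0))].
under eq_bigr do rewrite (K1 _ wy0 (G1B wy0)).
rewrite sumr_const card_ord mulr_natl; congr (_ *+ _); congr (_ * _).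
rewrite -(wRZ (@P_ge0 m) (@P1 m) wy0 (@nbG m (w y) _ 1 ler01 (G1B ler01) (w1 y))).
by apply: eq_wR => s; rewrite mul1r.
Qed.


Definition Z := wR p w.
Definition W2 := wR p (fun t => w t ^+ 2).

Lemma w0 t : 0 <= w t. Proof. exact: le_trans ler01 (w1 t). Qed.

Lemma nb_w : nb w.
Proof. by exists M; [exact: M0| move=> t; rewrite w0 wM]. Qed.

Lemma nb_w2 : nb (fun t => w t ^+ 2).
Proof.
exists (M ^+ 2); first by rewrite sqr_ge0.
by move=> t; rewrite sqr_ge0 /= lerXn2r ?nnegrE ?w0 ?M0 ?wM.
Qed.

Lemma nb_S N : nb (fun s : N.-tuple Y => S s).
Proof.
exists (N%:R * M); first by rewrite mulr_ge0 ?M0.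
by move=> s; rewrite S_ge0 S_le.
Qed.

Lemma nb_S2 N : nb (fun s : N.-tuple Y => S s ^+ 2).
Proof.
exists ((N%:R * M) ^+ 2); first by rewrite sqr_ge0.
move=> s; rewrite sqr_ge0 /= lerXn2r ?nnegrE ?S_ge0 ?S_le //.
by rewrite mulr_ge0 ?M0.
Qed.

Lemma M1 m : wR (@P m) (fun s => S s) = m%:R * Z.
Proof.
elim: m => [|m IH].
  rewrite mul0r -[RHS](wRC (@P1 0) (lexx 0)).
  by apply: eq_wR => s; rewrite /S big_ord0.
have q0 := @P_ge0 m; have q1 := @P1 m.
rewrite (ER_dec (nb_S _)).
rewrite (@eq_wR _ _ _ (fun t => w t + m%:R * Z)); last first.
  move=> t; rewrite (@eq_wR _ _ _ (fun s => w t + S s)); last by move=> s; rewrite Scons.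
  by rewrite (wRD q0 q1 (nbC _ (w0 t)) (nb_S _)) (wRC q1 (w0 t)) IH.
have mZ0 : 0 <= m%:R * Z by rewrite mulr_ge0 // /Z (wR_ge0 p0 p1 nb_w).
rewrite (wRD p0 p1 nb_w (nbC _ mZ0)) (wRC p1 mZ0).
by rewrite /Z -natr1 mulrDl mul1r addrC.
Qed.

Lemma Z_ge0 : 0 <= Z.
Proof. exact: (wR_ge0 p0 p1 nb_w). Qed.

Lemma M2 m : wR (@P m) (fun s => S s ^+ 2) = m%:R * W2 + m%:R * (m%:R - 1) * Z ^+ 2.
Proof.
elim: m => [|m IH].
  rewrite !mul0r addr0 -[RHS](wRC (@P1 0) (lexx 0)).
  by apply: eq_wR => s; rewrite /S big_ord0 expr0n.
have q0 := @P_ge0 m; have q1 := @P1 m.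
have mZ0 : 0 <= m%:R * Z by rewrite mulr_ge0 // Z_ge0.
set V := m%:R * W2 + m%:R * (m%:R - 1) * Z ^+ 2.
have V0 : 0 <= V by rewrite /V -IH (wR_ge0 q0 q1 (nb_S2 _)).
rewrite (ER_dec (nb_S2 _)).
rewrite (@eq_wR _ _ _ (fun t => (w t ^+ 2 + (2 * (m%:R * Z)) * w t) + V)); last first.
  move=> t; rewrite (@eq_wR _ _ _ (fun s => (w t ^+ 2 + (2 * w t) * S s) + S s ^+ 2)); last first.
    by move=> s; rewrite Scons; ring.
  have h2 : 0 <= 2 * w t by rewrite mulr_ge0 ?w0.
  have hw2 : 0 <= w t ^+ 2 by rewrite sqr_ge0.
  have nA : nb (fun s : m.-tuple Y => w t ^+ 2 + 2 * w t * S s).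
    exact: (nbD (nbC _ hw2) (nbZ h2 (nb_S _))).
  rewrite (wRD q0 q1 nA (nb_S2 _)) (wRD q0 q1 (nbC _ hw2) (nbZ h2 (nb_S _))).
  rewrite (wRC q1 hw2) (wRZ q0 q1 h2 (nb_S _)) IH M1 /V; ring.
have h2 : 0 <= 2 * (m%:R * Z) by rewrite mulr_ge0.
have nA : nb (fun t => w t ^+ 2 + 2 * (m%:R * Z) * w t).
  exact: (nbD nb_w2 (nbZ h2 nb_w)).
rewrite (wRD p0 p1 nA (nbC _ V0)) (wRD p0 p1 nb_w2 (nbZ h2 nb_w)).
rewrite (wRZ p0 p1 h2 nb_w) (wRC p1 V0) -/W2 -/Z /V -natr1; ring.
Qed.


Definition mu m := wR (@P m) (fun s => 1 / (w y + S s)).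

Lemma Z1 : 1 <= Z.
Proof.
rewrite -[X in X <= _](wRC p1 ler01).
by apply: (wR_mono p0 p1 (nbC _ ler01) nb_w) => t; exact: w1.
Qed.

Lemma ZM : Z <= M.
Proof. exact: (wR_le p0 p1 nb_w wM M0). Qed.

Lemma W2M : W2 <= M * Z.
Proof.
rewrite /Z -(wRZ p0 p1 M0 nb_w).
apply: (wR_mono p0 p1 nb_w2 (nbZ M0 nb_w)) => t.
by rewrite expr2 ler_wpM2r ?w0.
Qed.

Lemma mu_key m : wR (@P m) (fun s => 1 / (w y + S s) + ((w y + m%:R * Z) ^+ 2)^-1 * (w y + S s))
   = mu m + 1 / (w y + m%:R * Z).
Proof.
have q0 := @P_ge0 m; have q1 := @P1 m.
set a := w y + m%:R * Z.
have a0 : 0 < a by rewrite /a ltr_pwDl ?mulr_ge0 ?Z_ge0 // (lt_le_trans ltr01 (w1 y)).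
have ia0 : 0 <= (a ^+ 2)^-1 by rewrite invr_ge0 sqr_ge0.
have nK : nb (fun s : m.-tuple Y => w y + S s) := nbD (nbC _ (w0 y)) (nb_S m).
have nI : nb (fun s : m.-tuple Y => 1 / (w y + S s)) := @nbG m (w y) _ 1 ler01 (G1B ler01) (w1 y).
rewrite (wRD q0 q1 nI (nbZ ia0 nK)) (wRZ q0 q1 ia0 nK) (wRD q0 q1 (nbC _ (w0 y)) (nb_S m)).
rewrite (wRC q1 (w0 y)) M1 -/a -/(mu m); congr (_ + _).
by field; rewrite gt_eqF.
Qed.

Lemma mu_lower m : 1 / (w y + m%:R * Z) <= mu m.
Proof.
have q0 := @P_ge0 m; have q1 := @P1 m.
set a := w y + m%:R * Z.
have a0 : 0 < a by rewrite /a ltr_pwDl ?mulr_ge0 ?Z_ge0 // (lt_le_trans ltr01 (w1 y)).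
have ia0 : 0 <= (a ^+ 2)^-1 by rewrite invr_ge0 sqr_ge0.
have nK : nb (fun s : m.-tuple Y => w y + S s) := nbD (nbC _ (w0 y)) (nb_S m).
have nI : nb (fun s : m.-tuple Y => 1 / (w y + S s)) := @nbG m (w y) _ 1 ler01 (G1B ler01) (w1 y).
have h2a : 0 <= 2 / a by rewrite divr_ge0 ?ltW.
have : 2 / a <= mu m + 1 / a.
  rewrite -mu_key -[X in X <= _](wRC q1 h2a).
  apply: (wR_mono q0 q1 (nbC _ h2a) (nbD nI (nbZ ia0 nK))) => s.
  apply: ptl => //; apply: (lt_le_trans (lt_le_trans ltr01 (w1 y))).
  by rewrite lerDl S_ge0.
move=> h; rewrite -(lerD2r (1 / a)); apply: le_trans h.
by rewrite le_eqVlt; apply/orP; left; apply/eqP; field; rewrite gt_eqF.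
Qed.


Lemma nb_f3 m : nb (fun s : m.-tuple Y => (S s - m%:R * Z) ^+ 2).
Proof.
have mM0 : 0 <= m%:R * M by rewrite mulr_ge0 ?M0.
exists (2 * (m%:R * M) ^+ 2); first by rewrite mulr_ge0 ?sqr_ge0.
move=> s; rewrite sqr_ge0 /=.
have h1 := S_ge0 s; have h2 := S_le s.
have h3 : 0 <= m%:R * Z by rewrite mulr_ge0 ?Z_ge0.
have h4 : m%:R * Z <= m%:R * M by rewrite ler_wpM2l ?ZM.
nra.
Qed.

Lemma V3 m : wR (@P m) (fun s => (S s - m%:R * Z) ^+ 2) = m%:R * W2 - m%:R * Z ^+ 2.
Proof.
have q0 := @P_ge0 m; have q1 := @P1 m.
have h3 : 0 <= m%:R * Z by rewrite mulr_ge0 ?Z_ge0.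
have h2 : 0 <= 2 * (m%:R * Z) by rewrite mulr_ge0.
have hc : 0 <= (m%:R * Z) ^+ 2 by rewrite sqr_ge0.
have E : wR (@P m) (fun s => (S s - m%:R * Z) ^+ 2 + (2 * (m%:R * Z)) * S s) =
         wR (@P m) (fun s => S s ^+ 2 + (m%:R * Z) ^+ 2).
  by apply: eq_wR => s; ring.
rewrite (wRD q0 q1 (nb_f3 m) (nbZ h2 (nb_S m))) (wRZ q0 q1 h2 (nb_S m)) in E.
rewrite (wRD q0 q1 (nb_S2 m) (nbC _ hc)) (wRC q1 hc) M2 M1 in E.
have -> : wR (@P m) (fun s => (S s - m%:R * Z) ^+ 2) =
   (wR (@P m) (fun s => (S s - m%:R * Z) ^+ 2) + 2 * (m%:R * Z) * (m%:R * Z)) - 2 * (m%:R * Z) * (m%:R * Z).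
  by rewrite addrK.
rewrite E; ring.
Qed.

Lemma mu_upper m : mu m <= 1 / (w y + m%:R * Z) +
   m%:R * (W2 - Z ^+ 2) / ((w y + m%:R * Z) ^+ 2 * (w y + m%:R)).
Proof.
have q0 := @P_ge0 m; have q1 := @P1 m.
set a := w y + m%:R * Z.
set L := w y + m%:R.
have a0 : 0 < a by rewrite /a ltr_pwDl ?mulr_ge0 ?Z_ge0 // (lt_le_trans ltr01 (w1 y)).
have L0 : 0 < L by rewrite /L ltr_pwDl // (lt_le_trans ltr01 (w1 y)).
have ia0 : 0 <= (a ^+ 2)^-1 by rewrite invr_ge0 sqr_ge0.
have c0 : 0 <= (a ^+ 2)^-1 / L by apply: divr_ge0 => //; exact: ltW.
have nK : nb (fun s : m.-tuple Y => w y + S s) := nbD (nbC _ (w0 y)) (nb_S m).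
have nI : nb (fun s : m.-tuple Y => 1 / (w y + S s)) := @nbG m (w y) _ 1 ler01 (G1B ler01) (w1 y).
have h2a : 0 <= 2 / a by rewrite divr_ge0 ?ltW.
have : mu m + 1 / a <= 2 / a + ((a ^+ 2)^-1 / L) * (m%:R * W2 - m%:R * Z ^+ 2).
  rewrite -mu_key -(V3 m) -(wRZ q0 q1 c0 (nb_f3 m)) -(wRC q1 h2a).
  rewrite -(wRD q0 q1 (nbC _ h2a) (nbZ c0 (nb_f3 m))).
  apply: (wR_mono q0 q1 (nbD nI (nbZ ia0 nK)) (nbD (nbC _ h2a) (nbZ c0 (nb_f3 m)))) => s.
  have -> : S s - m%:R * Z = (w y + S s) - a by rewrite /a; ring.
  apply: ptu => //; rewrite /L lerD2l; exact: S_ge.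
move=> h; rewrite -(lerD2r (1 / a)); apply: (le_trans h).
by rewrite le_eqVlt; apply/orP; left; apply/eqP; field; rewrite !gt_eqF.
Qed.

Lemma g_bounds m :
  1 - M / m.+1%:R <= m.+1%:R * Z * mu m <= 1 + 3 * M / m.+1%:R.
Proof.
have m0 : 0 <= m%:R :> R by [].
rewrite -natr1; apply/andP; split.
  exact: (alg_lower m0 (w1 y) (wM y) Z1 ZM (mu_lower m)).
have m01 : m%:R = 0 :> R \/ 1 <= m%:R :> R.
  by case: (m) => [|k]; [left|right; rewrite ler1n].
exact: (alg_upper m0 m01 (w1 y) (wM y) Z1 ZM W2M (mu_upper m)).
Qed.

End Tup.

Lemma esum_pt (T : choiceType) (t0 : T) (c : R) : 0 <= c ->
  (\esum_(y in [set: T]) ((t0 == y)%:R * c)%:E = c%:E)%E.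
Proof.
move=> c0; rewrite (esumID [set t0]); last first.
  by move=> y _; rewrite lee_fin mulr_ge0 //; case: (t0 == y).
rewrite setTI esum_set1; last by rewrite lee_fin eqxx mul1r.
rewrite eqxx mul1r esum1 ?adde0 // => y [_ /eqP] ny.
by rewrite eq_sym (negbTE ny) mul0r.
Qed.

Section Fin.
Variables (Y : choiceType) (p : Y -> R).
Hypothesis p0 : forall y, 0 <= p y.
Hypothesis p1 : (\esum_(y in [set: Y]) (p y)%:E = 1)%E.
Variable (w : Y -> R).
Hypothesis w1 : forall t, 1 <= w t.

Definition Af m (y : Y) (s : m.+1.-tuple Y) :=
  (\sum_(i < m.+1) dl y (tnth s i) * w (tnth s i)) / S w s.

Lemma S_gt0 m (s : m.+1.-tuple Y) : 0 < S w s.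
Proof.
apply: lt_le_trans (S_ge w1 s); by rewrite ltr0n.
Qed.

Lemma Af_split m y (s : m.+1.-tuple Y) :
  Af y s = \sum_(i < m.+1) ((tnth s i == y)%:R * (w (tnth s i) / S w s)).
Proof. by rewrite /Af mulr_suml; apply: eq_bigr => i _; rewrite mulrA. Qed.

Lemma nb_Af m y : nb (@Af m y).
Proof.
exists 1 => // s; have S0 := S_gt0 s.
have w0 t : 0 <= w t by apply: le_trans ler01 (w1 t).
apply/andP; split.
  apply: divr_ge0; last exact: ltW.
  by apply: sumr_ge0 => i _; rewrite mulr_ge0 ?w0 //; rewrite /dl; case: (_ == _).
rewrite /Af ler_pdivrMr // mul1r /S; apply: ler_sum => i _.
by rewrite /dl; case: (_ == _); rewrite ?mul1r ?mul0r ?w0.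
Qed.

Lemma sum_q m : (\esum_(y in [set: Y]) (wR (@P _ p m.+1) (@Af m y))%:E = 1)%E.
Proof.
have q0 := @P_ge0 _ _ p0 m.+1; have q1 := @P1 _ _ p0 p1 m.+1.
have Af0 y s : 0 <= @Af m y s by case: (nb_Af m y) => B _ /(_ s) /andP[].
rewrite (eq_esum (b := fun y => \esum_(s in [set: m.+1.-tuple Y]) (P p s * Af y s)%:E)%E); last first.
  by move=> y _; rewrite -(wE_fin q0 q1 (nb_Af m y)).
rewrite (esum_esum (I := [set: Y]) (J := fun _ => [set: m.+1.-tuple Y])
   (a := fun y s => (P p s * Af y s)%:E)); last first.
  by move=> y s _ _; rewrite lee_fin mulr_ge0.
rewrite (reindex_esum ([set: m.+1.-tuple Y] `*`` (fun _ => [set: Y])) _ (fun z => (z.2, z.1))); last first.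
  split.
  - by move=> [s y] _.
  - by move=> [s y] [s' y'] _ _ [] -> ->.
  - by move=> [y s] _; exists (s, y).
rewrite /= -(esum_esum (I := [set: m.+1.-tuple Y]) (J := fun _ => [set: Y])
   (a := fun s y => (P p s * Af y s)%:E)); last first.
  by move=> s y _ _; rewrite lee_fin mulr_ge0.
rewrite -[RHS](P1 p0 p1 m.+1); apply: eq_esum => s _.
rewrite esumZ ?q0 //.
suff -> : (\esum_(y in [set: Y]) (Af y s)%:E)%E = 1%E by rewrite mule1.
under eq_esum do rewrite Af_split -sumEFin.
rewrite esum_sum; last first.
  move=> y i _ _; rewrite lee_fin; apply: mulr_ge0; first by case: (tnth s i == y).
  by apply: divr_ge0; [exact: (le_trans ler01 (w1 _)) | exact: ltW (S_gt0 s)].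
have hc i : 0 <= w (tnth s i) / S w s.
  by apply: divr_ge0; [exact: (le_trans ler01 (w1 _)) | exact: ltW (S_gt0 s)].
under eq_bigr do rewrite esum_pt ?hc //.
by rewrite sumEFin -mulr_suml divff // gt_eqF // S_gt0.
Qed.

End Fin.
End Aux.

Section KLs.
Variable R : realType.

Lemma esumZ' (T : choiceType) (S : set T) (r : R) (f : T -> R) : 0 <= r ->
  (\esum_(i in S) (r * f i)%:E = r%:E * \esum_(i in S) (f i)%:E)%E.
Proof.
move=> r0; rewrite /esum -ereal_supZl //; last first.
  by apply/set0P; exists 0%E; exists set0; [exact: fsets_set0 | rewrite fsbig_set0].
congr ereal_sup; apply/seteqP; split => x /=.
  move=> [A [finA AS] <-]; exists (\sum_(i \in A) (f i)%:E)%E; first by exists A.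
  by rewrite !fsumEFin // -EFinM mulr_fsumr.
move=> [y [A [finA AS] <-] <-]; exists A => //.
by rewrite !fsumEFin // -EFinM mulr_fsumr.
Qed.

Lemma maxpn (x : R) : Num.max x 0 = Num.max (- x) 0 + x.
Proof.
rewrite !maxEle; case: (lerP x 0) => h; case: (lerP (- x) 0) => h'; lra.
Qed.

Lemma t_bounds (q pi : R) : 0 <= q -> 0 < pi ->
  q - pi <= q * ln (q / pi) <= q - pi + (q - pi) ^+ 2 / pi.
Proof.
move=> q0 pi0; have [->|qn0] := eqVneq q 0.
  rewrite mul0r !add0r oppr_le0 ltW //=.
  have -> : (- pi) ^+ 2 / pi = pi by field; rewrite gt_eqF.
  by rewrite addNr.
have qp : 0 < q by rewrite lt_neqAle eq_sym qn0.
set g := q / pi; have g0 : 0 < g by rewrite divr_gt0.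
have gi0 : 0 < g^-1 by rewrite invr_gt0.
have h1 : - ln g <= g^-1 - 1.
  have hx : -1 < g^-1 - 1 by lra.
  have := le_ln1Dx hx; rewrite (_ : 1 + (g^-1 - 1) = g^-1); last by ring.
  by rewrite lnV ?posrE.
have h2 : ln g <= g - 1.
  have hx : -1 < g - 1 by lra.
  by have := le_ln1Dx hx; rewrite (_ : 1 + (g - 1) = g); last by ring.
apply/andP; split.
  have -> : q - pi = q * (1 - g^-1) by rewrite /g; field; rewrite !gt_eqF.
  by apply: ler_wpM2l => //; lra.
have -> : q - pi + (q - pi) ^+ 2 / pi = q * (g - 1) by rewrite /g; field; rewrite gt_eqF.
by apply: ler_wpM2l.
Qed.

Lemma fin_bnd' (x : \bar R) (B : R) : (0 <= x)%E -> (x <= B%:E)%E -> x = (fine x)%:E.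
Proof. by case: x. Qed.

Lemma KL_bound (Y : choiceType) (qq pp : Y -> R) (e2 : R) :
  (forall y, 0 <= qq y) -> (forall y, 0 < pp y) ->
  (\esum_(y in [set: Y]) (qq y)%:E <= 1)%E -> (\esum_(y in [set: Y]) (pp y)%:E = 1)%E ->
  (forall y, (qq y - pp y) ^+ 2 / pp y <= e2 * pp y) -> 0 <= e2 ->
  (KL qq pp <= (2 * e2)%:E)%E.
Proof.
move=> q0 p0 sq sp he e20.
set t := fun y => qq y * ln (qq y / pp y).
set e := fun y => (qq y - pp y) ^+ 2 / pp y.
have e0 y : 0 <= e y by rewrite /e divr_ge0 ?sqr_ge0 ?ltW.
have tb y := t_bounds (q0 y) (p0 y).
set E := (\esum_(y in [set: Y]) (e y)%:E)%E.
have E0 : (0 <= E)%E by apply: esum_ge0 => y _; rewrite lee_fin.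
have Ele : (E <= e2%:E)%E.
  apply: (@le_trans _ _ (\esum_(y in [set: Y]) (e2 * pp y)%:E)%E).
    by apply: le_esum => y _; rewrite lee_fin he.
  by rewrite esumZ' // sp mule1.
have Ef : E = (fine E)%:E := fin_bnd' E0 Ele.
set Pd := (\esum_(y in [set: Y]) (Num.max (qq y - pp y) 0)%:E)%E.
set Nd := (\esum_(y in [set: Y]) (Num.max (- (qq y - pp y)) 0)%:E)%E.
set Sq := (\esum_(y in [set: Y]) (qq y)%:E)%E.
have Pd0 : (0 <= Pd)%E by apply: esum_ge0 => y _; rewrite lee_fin le_max lexx orbT.
have Nd0 : (0 <= Nd)%E by apply: esum_ge0 => y _; rewrite lee_fin le_max lexx orbT.
have Sq0 : (0 <= Sq)%E by apply: esum_ge0 => y _; rewrite lee_fin.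
have Pdle : (Pd <= 1)%E.
  apply: le_trans sq; apply: le_esum => y _; rewrite lee_fin ge_max; apply/andP; split.
    by have := p0 y; lra.
  exact: q0.
have Ndle : (Nd <= 1)%E.
  rewrite -sp; apply: le_esum => y _; rewrite lee_fin ge_max; apply/andP; split.
    by have := q0 y; lra.
  exact: ltW.
have Pdf : Pd = (fine Pd)%:E := fin_bnd' Pd0 Pdle.
have Ndf : Nd = (fine Nd)%:E := fin_bnd' Nd0 Ndle.
have Sqf : Sq = (fine Sq)%:E := fin_bnd' Sq0 sq.
have ident : (Pd + 1 = Nd + Sq)%E.
  rewrite -sp /Pd /Nd /Sq -!esumD; last 4 first.
  - by move=> y _; rewrite lee_fin le_max lexx orbT.
  - by move=> y _; rewrite lee_fin.
  - by move=> y _; rewrite lee_fin le_max lexx orbT.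
  - by move=> y _; rewrite lee_fin ltW.
  apply: eq_esum => y _; rewrite -!EFinD; congr EFin.
  rewrite maxpn; ring.
have Pt_le : (\esum_(y in [set: Y]) (Num.max (t y) 0)%:E <= Pd + E)%E.
  rewrite /Pd /E -esumD; last 2 first.
  - by move=> y _; rewrite lee_fin le_max lexx orbT.
  - by move=> y _; rewrite lee_fin.
  apply: le_esum => y _; rewrite lee_fin ge_max; apply/andP; split.
    case/andP: (tb y) => _ h; apply: (le_trans h); rewrite -/(e y) lerD2r.
    by rewrite le_max lexx.
  by rewrite addr_ge0 // le_max lexx orbT.
have Nd_le : (Nd <= \esum_(y in [set: Y]) (Num.max (- t y) 0)%:E + E)%E.
  rewrite /E -esumD; last 2 first.
  - by move=> y _; rewrite lee_fin le_max lexx orbT.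
  - by move=> y _; rewrite lee_fin.
  apply: le_esum => y _; rewrite lee_fin ge_max; apply/andP; split.
    case/andP: (tb y) => _ h.
    have : - (qq y - pp y) <= - t y + e y by rewrite /e /t; lra.
    move=> h'; apply: (le_trans h'); rewrite lerD2r.
    by rewrite le_max lexx.
  by rewrite addr_ge0 // le_max lexx orbT.
rewrite /KL -/t.
have Nt' : (Nd - E <= \esum_(y in [set: Y]) (Num.max (- t y) 0)%:E)%E.
  by rewrite leeBlDr // Ef.
apply: (le_trans (leeB Pt_le Nt')).
have identR : fine Pd + 1 = fine Nd + fine Sq.
  by apply: EFin_inj; rewrite EFinD EFinD -Pdf -Ndf -Sqf.
have sqR : fine Sq <= 1 by rewrite -lee_fin -Sqf.
have EleR : fine E <= e2 by rewrite -lee_fin -Ef.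
rewrite Pdf Ndf Ef.
rewrite -EFinB lee_fin.
lra.
Qed.
End KLs.

Section Poi.
Variable R : realType.

Lemma expsum (x : R) K : 0 <= x -> \sum_(0 <= j < K) x ^+ j / j`!%:R <= expR x.
Proof.
move=> x0; rewrite /expR.
have := nondecreasing_cvgn_le _ (is_cvg_series_exp_coeff x) K.
rewrite /series /=; apply.
move=> a b ab; rewrite /series /= (@big_cat_nat _ _ _ a 0 b) //= lerDl.
by apply: sumr_ge0 => i _; rewrite /exp_coeff /= divr_ge0 ?exprn_ge0.
Qed.

Lemma inv_sq (i : nat) : (0 < i)%N -> 1 / i%:R ^+ 2 <= 6 / (i.+1%:R * i.+2%:R) :> R.
Proof.
move=> i0; have ir : 1 <= i%:R :> R by rewrite ler1n.
rewrite -!natr1 -addrA.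
rewrite ler_pdivrMr ?exprn_gt0 ?(lt_le_trans ltr01 ir) //.
rewrite mulrAC ler_pdivlMr; last by apply: mulr_gt0; lra.
nra.
Qed.


Lemma poi_sum (n : nat) (C0 : R) K : (3 <= n)%N -> 0 <= C0 ->
  \sum_(0 <= i < K | (0 < i)%N) poi_pos R n i * (C0 / i%:R ^+ 2) <= 12 * C0 / n%:R ^+ 2.
Proof.
move=> n3 C00.
set nr : R := n%:R.
have nr0 : 0 < nr by rewrite /nr ltr0n; apply: leq_trans n3.
set en := expR (- nr).
have en0 : 0 < en by rewrite expR_gt0.
have enh : en <= 1 / 2.
  rewrite /en expRN; have : 2 <= expR nr.
    apply: le_trans (expR_ge1Dx nr); rewrite /nr.
    have : (3%:R : R) <= n%:R by rewrite ler_nat.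
    lra.
  move=> h2; rewrite -div1r; apply: divle => //; first by apply: lt_le_trans h2; lra.
  lra.
set D := 1 - en.
have D0 : 0 < D by rewrite /D; lra.
set Kc := 6 * C0 * en / (nr ^+ 2 * D).
have Kc0 : 0 <= Kc.
  apply: divr_ge0; first by apply: mulr_ge0; [apply: mulr_ge0 => //; lra| exact: ltW].
  by apply: mulr_ge0; [exact: exprn_ge0 (ltW nr0)| exact: ltW].
set f := fun j : nat => nr ^+ j / j`!%:R.
have f0 j : 0 <= f j.
  by apply: divr_ge0; [exact: exprn_ge0 (ltW nr0)| exact: ler0n].
have term i : (0 < i)%N -> poi_pos R n i * (C0 / i%:R ^+ 2) <= Kc * f i.+2.
  move=> i0.
  have fi : 0 < i`!%:R :> R by rewrite ltr0n fact_gt0.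
  have ir : 0 < i%:R :> R by rewrite ltr0n.
  set F := C0 * en * nr ^+ i / (i`!%:R * D).
  have F0 : 0 <= F.
    apply: divr_ge0; first by apply: mulr_ge0; [apply: mulr_ge0 => //; exact: ltW| exact: exprn_ge0 (ltW nr0)].
    by apply: mulr_ge0; exact: ltW.
  have -> : poi_pos R n i * (C0 / i%:R ^+ 2) = F * (1 / i%:R ^+ 2).
    rewrite /poi_pos /F -/nr -/en -/D; field.
    by rewrite !gt_eqF.
  have -> : Kc * f i.+2 = F * (6 / (i.+1%:R * i.+2%:R)).
    rewrite /Kc /f /F !factS !natrM !exprS; field.
    have i1 : 0 < 1 + i%:R :> R by lra.
    have i2 : 0 < 2 + i%:R :> R by lra.
    by rewrite !gt_eqF.
  by apply: ler_wpM2l => //; exact: inv_sq.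
rewrite big_mkcond /=.
apply: (@le_trans _ _ (\sum_(0 <= i < K) Kc * f i.+2)).
  apply: ler_sum => i _; case: ifP => i0; first exact: term.
  by rewrite mulr_ge0.
rewrite -mulr_sumr.
apply: (@le_trans _ _ (Kc * expR nr)).
  apply: ler_wpM2l => //.
  apply: (@le_trans _ _ (\sum_(0 <= j < K.+2) f j)); last exact: expsum (ltW nr0).
  rewrite (@big_cat_nat _ _ _ 2 0 K.+2) //= -[X in X <= _]add0r lerD //.
    by apply: sumr_ge0 => j _.
  by rewrite !big_add1.
rewrite /Kc.
have -> : 6 * C0 * en / (nr ^+ 2 * D) * expR nr = 6 * C0 / (nr ^+ 2 * D).
  rewrite /en expRN; field; rewrite !gt_eqF ?expR_gt0 //.
apply: divle => //; first by rewrite mulr_gt0 // exprn_gt0.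
  by rewrite exprn_gt0.
have h : 0 <= 6 * C0 * nr ^+ 2.
  by apply: mulr_ge0; [apply: mulr_ge0 => //; lra| exact: exprn_ge0 (ltW nr0)].
have -> : 12 * C0 * (nr ^+ 2 * D) = (6 * C0 * nr ^+ 2) * (2 * D) by ring.
rewrite -[X in X <= _]mulr1; apply: ler_wpM2l => //; rewrite /D; lra.
Qed.

End Poi.

Section Final.
Variable R : realType.

Lemma perx (X Y : choiceType) (pit r : X -> Y -> R) (Rmax beta : R) (x : X) (m : nat) :
  is_distr (pit x) -> (forall y, 0 < pit x y) -> (forall y, 0 <= r x y <= Rmax) -> 0 < beta ->
  (KL (smc_out pit pit r beta m.+1 x) (tilted pit r beta x) <=
     (18 * expR (beta * Rmax) ^+ 2 / m.+1%:R ^+ 2)%:E)%E.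
Proof.
move=> [pp0 pp1] ppos rb b0.
set p := pit x.
have p0 : forall y, 0 <= p y := pp0.
have p1 : (\esum_(y in [set: Y]) (p y)%:E = 1)%E := pp1.
set w := fun t => expR (beta * r x t).
set M := expR (beta * Rmax).
have w1 t : 1 <= w t.
  apply: le_trans (expR_ge1Dx _); rewrite lerDl.
  by apply: mulr_ge0; [exact: ltW | case/andP: (rb t)].
have wM t : w t <= M.
  rewrite /w /M ler_expR; apply: ler_wpM2l; first exact: ltW.
  by case/andP: (rb t).
have phiE t : phi pit pit r beta x t = w t.
  by rewrite /phi divff ?mul1r // gt_eqF.
have qE : smc_out pit pit r beta m.+1 x = fun y => wR (@P _ _ p m.+1) (@Af _ _ w m y).
  apply/funext => y; rewrite /smc_out /esumR /wR /wE; congr fine; apply: eq_esum => s _.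
  congr EFin; rewrite /Af /S /dl; congr (_ * (_ / _)).
    by apply: eq_bigr => i _; rewrite phiE.
  by apply: eq_bigr => i _; rewrite phiE.
have piE : tilted pit r beta x = fun y => p y * w y / Z p w by [].
rewrite qE piE.
set Zv := Z p w.
have /set0P [y0 _] : [set: Y] != set0.
  apply/eqP => e; move: p1; rewrite e esum_set0 => /(congr1 fine) /= h.
  by move: h; lra.
have Z1' : 1 <= Zv := Z1 p0 p1 w1 wM y0.
have Zv0 : 0 < Zv by apply: lt_le_trans Z1'.
have w0 t : 0 < w t by apply: lt_le_trans (w1 t).
set N : R := m.+1%:R.
have N0 : 0 < N by rewrite /N ltr0n.
have M0 : 0 <= M by rewrite /M expR_ge0.
rewrite (_ : 18 * M ^+ 2 / N ^+ 2 = 2 * (9 * M ^+ 2 / N ^+ 2)); last by ring.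
apply: KL_bound.
- by move=> y; exact: (wR_ge0 (@P_ge0 _ _ _ p0 m.+1) (P1 p0 p1 m.+1) (nb_Af w1 m y)).
- by move=> y; rewrite divr_gt0 // mulr_gt0.
- by rewrite (sum_q p0 p1 w1 m).
- rewrite (eq_esum (b := fun y => (Zv^-1 * (p y * w y))%:E)); last by move=> y _; rewrite mulrC.
  rewrite esumZ ?invr_ge0 ?ltW //.
  have -> : (\esum_(y in [set: Y]) (p y * w y)%:E)%E = Zv%:E.
    exact: (wE_fin p0 p1 (nb_w w1 wM y0)).
  by rewrite -EFinM mulVf // gt_eqF.
- move=> y; rewrite (qform p0 p1 w1 y m) -/N.
  have hg := g_bounds p0 p1 w1 wM y m.
  rewrite -/N in hg.
  set mu0 := wR (@P _ _ p m) (fun s => 1 / (w y + S w s)).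
  have e : mu p w y m = mu0 by [].
  rewrite e -/Zv in hg.
  set gg := N * Zv * mu0 in hg *.
  have pi0 : 0 < p y * w y / Zv by rewrite divr_gt0 // mulr_gt0.
  have -> : (N * (p y * (w y * mu0)) - p y * w y / Zv) ^+ 2 / (p y * w y / Zv) =
            (p y * w y / Zv) * (gg - 1) ^+ 2.
    by rewrite /gg; field; rewrite !gt_eqF.
  rewrite mulrC; apply: ler_wpM2r; first exact: ltW.
  have MN0 : 0 <= M / N := divr_ge0 M0 (ltW N0).
  have -> : 9 * M ^+ 2 / N ^+ 2 = (3 * (M / N)) ^+ 2 by field; rewrite gt_eqF.
  case/andP: hg => h1 h2.
  rewrite (_ : 3 * M / N = 3 * (M / N)) in h2; last by rewrite mulrA.
  clearbody gg M N.
  have h3 : 0 <= 3 * (M / N) - (gg - 1) by lra.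
  have h4 : 0 <= 3 * (M / N) + (gg - 1) by lra.
  have := mulr_ge0 h3 h4; nra.
- apply: divr_ge0; last exact: exprn_ge0 (ltW N0).
  by apply: mulr_ge0; [lra | exact: exprn_ge0].
Qed.


Lemma KLc_bound (X Y : choiceType) (rho : X -> R) (pit r : X -> Y -> R) (Rmax beta : R) (m : nat) :
  is_distr rho -> (forall x, is_distr (pit x)) -> (forall x y, 0 < pit x y) ->
  (forall x y, 0 <= r x y <= Rmax) -> 0 < beta ->
  (KLcond rho (smc_out pit pit r beta m.+1) (tilted pit r beta) <=
     (18 * expR (beta * Rmax) ^+ 2 / m.+1%:R ^+ 2)%:E)%E.
Proof.
move=> [r0 r1] hd hp hr hb.
set B := 18 * expR (beta * Rmax) ^+ 2 / m.+1%:R ^+ 2.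
have B0 : 0 <= B.
  apply: divr_ge0; last exact: exprn_ge0.
  by apply: mulr_ge0; [lra | exact: exprn_ge0 (expR_ge0 _)].
rewrite /KLcond.
apply: (le_trans (le_esum (b := fun x => (B * rho x)%:E) _)).
  move=> x _; rewrite mulrC EFinM; apply: lee_wpmul2l; first by rewrite lee_fin.
  by apply: perx.
by rewrite esumZ // r1 mule1.
Qed.

Lemma poi_ge0 (n N : nat) : (0 < n)%N -> 0 <= poi_pos R n N.
Proof.
move=> n0; rewrite /poi_pos.
have h : expR (- n%:R) < 1 :> R by rewrite expR_lt1 oppr_lt0 ltr0n.
apply: divr_ge0; last by lra.
apply: divr_ge0; last exact: ler0n.
by apply: mulr_ge0; [exact: expR_ge0 | exact: exprn_ge0].
Qed.

End Final.

Unset Implicit Arguments.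
Set Strict Implicit.

Theorem corollaryB8 (R : realType) :
  exists (C : R) (k : nat), 0 < C /\
  forall (X Y : choiceType) (rho : X -> R) (pit pig : X -> Y -> R)
         (r : X -> Y -> R) (Rmax beta : R),
    is_distr rho ->
    (forall x, is_distr (pit x)) ->
    (forall x y, 0 < pit x y) ->
    pig = pit ->
    (forall x y, 0 <= r x y <= Rmax) ->
    0 < beta ->
    forall n : nat, (3 <= n)%N ->
      (poi_KL rho pit pig r beta n
         <= (C * expR (2 * beta * Rmax) * ln (n%:R : R) ^+ k / (n%:R ^+ 2))%:E)%E
   /\ (KLcond rho (smc_out pit pig r beta n) (tilted pit r beta)
         <= (C * expR (2 * beta * Rmax) * ln (n%:R : R) ^+ k
             / (n%:R `^ (3 / 2)))%:E)%E.
Proof.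
exists 216, 0%N; split; first by lra.
move=> X Y rho pit pig r Rmax beta hrho hpit hpos -> hr hb n n3.
have hM : expR (2 * beta * Rmax) = expR (beta * Rmax) ^+ 2 by rewrite -mulrA expRM_natl.
rewrite hM expr0 mulr1.
set M := expR (beta * Rmax).
have M20 : 0 <= M ^+ 2 by exact: exprn_ge0 (expR_ge0 _).
have C00 : 0 <= 18 * M ^+ 2 by apply: mulr_ge0 => //; lra.
have n0 : (0 < n)%N by apply: leq_trans n3.
split.
- rewrite /poi_KL.
  apply: (le_trans (le_esum (b := fun N => (poi_pos R n N * (18 * M ^+ 2 / N%:R ^+ 2))%:E) _)).
    move=> N N0; case: N N0 => [|k] N0; first by move: N0; rewrite /= ltnn.
    rewrite (EFinM (poi_pos R n k.+1)); apply: lee_wpmul2l; first by rewrite lee_fin poi_ge0.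
    exact: KLc_bound.
  rewrite -(nneseries_esum (P := fun N => (0 < N)%N)); last first.
    move=> N _; rewrite lee_fin; apply: mulr_ge0; first exact: poi_ge0.
    by apply: divr_ge0 => //; exact: exprn_ge0.
  apply: lime_le.
    apply: (is_cvg_nneseries_cond (N := 0)) => N _ _; rewrite lee_fin; apply: mulr_ge0; first exact: poi_ge0.
    by apply: divr_ge0 => //; exact: exprn_ge0.
  apply: nearW => K; rewrite sumEFin lee_fin.
  apply: (le_trans (poi_sum K n3 C00)).
  by rewrite le_eqVlt; apply/orP; left; apply/eqP; ring.
- case: n n3 n0 => [//|m] n3 n0.
  apply: (le_trans (KLc_bound m hrho hpit hpos hr hb)); rewrite lee_fin -/M.
  have N1 : 1 <= m.+1%:R :> R by rewrite ler1n.
  have hp : m.+1%:R `^ (3 / 2) <= m.+1%:R ^+ 2 :> R.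
    rewrite -powR_mulrn; last by lra.
    by apply: ler_powR => //; lra.
  have hp0 : 0 < m.+1%:R `^ (3 / 2) :> R by apply: powR_gt0; lra.
  apply: divle => //.
  apply: (le_trans (ler_wpM2l C00 hp)).
  apply: ler_wpM2r; first by apply: exprn_ge0; lra.
  by apply: ler_wpM2r => //; lra.
Qed.
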